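(* Let $(\mathcal{X},\mathbf{h})$ be a representable polymatroid, and for $0\le\epsilon\le\mathbf{h}(\mathcal{X})$ define $\mathbf{g}_\epsilon(\mathcal{A})=\min\big(\mathbf{h}(\mathcal{A}),\ \mathbf{h}(\mathcal{X})-\epsilon\big)$ for all $\mathcal{A}\subseteq\mathcal{X}$. Then $(\mathcal{X},\mathbf{g}_\epsilon)$ is almost representable for every $0\le\epsilon\le\mathbf{h}(\mathcal{X})$. Moreover, if $\epsilon\in\mathbb{Z}$ then $(\mathcal{X},\mathbf{g}_\epsilon)$ is representable.
   Context: A polymatroid $(\mathcal{X},\mathbf{h})$ is a finite ground set $\mathcal{X}$ with a function $\mathbf{h}:2^{\mathcal{X}}\to\mathbb{R}_{\ge0}$ satisfying $\mathbf{h}(\emptyset)=0$, monotonicity, and submodularity. Let $\mathcal{X}=\{X_1,\dots,X_n\}$ and $X_\alpha=\{X_i:i\in\alpha\}$ for $\alpha\subseteq\{1,\dots,n\}$. The polymatroid is $q$-representable if there exist subspaces $V_1,\dots,V_n$ of a vector space over the finite field $\mathbb{F}_q$ with $\mathbf{h}(X_\alpha)=\dim\langle V_i: i\in\alpha\rangle$ for all $\alpha$ (where $\langle\cdot\rangle$ denotes the span); it is representable if it is $q$-representable for some $q$. Viewing rank functions as vectors in $\mathbb{R}^{2^{|\mathcal{X}|}}$, $\mathbf{h}$ is almost representable if there exist representable rank functions $\mathbf{g}_i$ on $\mathcal{X}$ and positive reals $c_i$ with $\mathbf{h}=\lim_{i\to\infty}c_i\mathbf{g}_i$. *)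

(* Defs.v *)
From HB Require Import structures.
From mathcomp Require Import all_boot all_order all_algebra all_field.
From mathcomp Require Import archimedean.
From mathcomp Require Import all_classical all_reals topology normedtype sequences.
Set Implicit Arguments. Unset Strict Implicit. Unset Printing Implicit Defensive.
Import Order.TTheory GRing.Theory Num.Theory.
Local Open Scope ring_scope.
Local Open Scope classical_set_scope.

(* Ground set X = {X_1,...,X_n} is modelled by 'I_n; subsets X_alpha by {set 'I_n}.
   A rank function is a real-valued function on {set 'I_n}. *)

(* dim < V_i : i in A >, where each subspace V_i of F^m is the row space of
   the m x m matrix V i. *)
Definition span_dim (F : fieldType) (n m : nat) (V : 'I_n -> 'M[F]_m)
  (A : {set 'I_n}) : nat :=
  \rank (\sum_(i in A) V i)%MS.

Definition q_representable (R : realType) (q n : nat) (h : {set 'I_n} -> R) : Prop :=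
  exists (F : finFieldType) (m : nat) (V : 'I_n -> 'M[F]_m),
    #|F| = q /\ forall A : {set 'I_n}, h A = (span_dim V A)%:R.

Definition representable (R : realType) (n : nat) (h : {set 'I_n} -> R) : Prop :=
  exists q : nat, q_representable q h.

Definition almost_representable (R : realType) (n : nat) (h : {set 'I_n} -> R) : Prop :=
  exists (g : nat -> {set 'I_n} -> R) (c : nat -> R),
    (forall k, representable (g k)) /\ (forall k, 0 < c k) /\
    forall A : {set 'I_n}, (c k * g k A) @[k --> \oo] --> (h A : R^o).

Definition truncate (R : realType) (n : nat) (h : {set 'I_n} -> R) (eps : R)
  : {set 'I_n} -> R :=
  fun A => Num.min (h A) (h [set: 'I_n]%SET - eps).

(* Main.v *)
Require Import Defs.
From HB Require Import structures.
From mathcomp Require Import all_boot all_order all_algebra all_field.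
From mathcomp Require Import archimedean.
From mathcomp Require Import all_classical all_reals topology normedtype sequences.
From mathcomp Require Import zify ring lra.
Set Implicit Arguments. Unset Strict Implicit.
Import Order.TTheory GRing.Theory Num.Theory.
Local Open Scope ring_scope.


Lemma ext_step (F : finFieldType) :
  exists (K : finFieldType) (f : {rmorphism F -> K}), (#|F| < #|K|)%N.
Proof.
pose p : {poly F} := \prod_(x : F) ('X - x%:P) + 1.
have szp : (1 < size p)%N.
  have : (0 < size (index_enum F))%N by case: (index_enum F) (mem_index_enum (0:F)).
  by move=> H; rewrite /p size_polyDl size_prod_XsubC // size_polyC oner_neq0.
have pnz : p != 0 by rewrite -size_poly_gt0 ltnW.
have [L [rs Hrs _]] := FinSplittingFieldFor pnz.
set K := finvect_type L.
exists K, (in_alg K).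
have pa : forall a : F, p.[a] = 1.
  move=> a; rewrite /p hornerD hornerC horner_prod.
  by rewrite (bigD1 a) //= hornerXsubC subrr mul0r add0r.
case: rs Hrs => [|z rs] Hrs.
  by move/eqp_size: Hrs szp; rewrite big_nil size_poly1 size_map_poly => ->.
have zr : root (map_poly (in_alg L) p) z.
  by rewrite (eqp_root Hrs) root_prod_XsubC mem_head.
have nim : z \notin [set (in_alg K) x | x in F].
  apply/imsetP => -[a _ za]; move: zr; rewrite /root za.
  rewrite (horner_map (in_alg L)) pa rmorph1 oner_eq0 //.
rewrite -(card_imset (mem F) (fmorph_inj (in_alg K))) -cardsT.
apply: proper_card; rewrite properT; apply/eqP => E.
by move: nim; rewrite E => /negP[]; apply: finset.in_setT.
Qed.

Lemma ext_big (F : finFieldType) N :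
  exists (K : finFieldType) (f : {rmorphism F -> K}), (N < #|K|)%N.
Proof.
elim: N => [|N [K [f HK]]].
  by exists F, idfun; apply/card_gt0P; exists 0.
have [K' [g HK']] := ext_step K.
by exists K', (g \o f)%FUN; apply: leq_ltn_trans HK'.
Qed.

Section Lin.
Variable K : finFieldType.

Definition Sp m p (B : 'M[K]_(p, m)) := [set u : 'rV[K]_m | (u <= B)%MS].

Lemma card_Sp m p (B : 'M[K]_(p, m)) : #|Sp B| = (#|K| ^ \rank B)%N.
Proof.
have -> : Sp B = [set x *m row_base B | x : 'rV[K]_(\rank B)].
  apply/setP => u; rewrite inE; apply/idP/imsetP.
    move=> uB; have : (u <= row_base B)%MS by rewrite (eq_row_base B).
    by move=> /submxP[D ->]; exists D.
  by move=> [x _ ->]; rewrite -(eq_row_base B) submxMl.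
rewrite card_imset; last exact: row_free_inj (row_base_free B).
by have := card_mx K 1 (\rank B); rewrite mul1n.
Qed.

Lemma kermx_coker m (v : 'rV[K]_m) : (kermx (cokermx v) :=: v)%MS.
Proof.
apply/eqmxP/andP; split.
  apply/row_subP => i; rewrite submxE -row_mul mulmx_ker row0 //.
by rewrite sub_kermx mulmx_coker.
Qed.

Lemma rank_coker m p (B : 'M[K]_(p, m)) (v : 'rV[K]_m) : v != 0 ->
  \rank (B *m cokermx v) = (\rank B - (v <= B)%MS)%N.
Proof.
move=> vnz; have := mxrank_mul_ker B (cokermx v).
rewrite (cap_eqmx (eqmx_refl B) (kermx_coker v)).
case vB: (v <= B)%MS.
  by rewrite (capmx_idPr vB) rank_rV vnz => <-; rewrite addnK.
suff -> : \rank (B :&: v)%MS = 0%N by rewrite addn0 subn0.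
move: (mxrank_leqif_eq (capmxSr B v)); rewrite rank_rV vnz /= => -[Hle Heq].
case E: (\rank (B :&: v)%MS) Hle Heq => [//|k] Hle Heq.
have k0 : k = 0%N by move: Hle; case: (k).
subst k.
have : (B :&: v == v)%MS by rewrite -Heq.
case/andP=> _ vc; move: (submx_trans vc (capmxSl B v)).
by rewrite vB.
Qed.

Lemma sumsmx_subset n m (V : 'I_n -> 'M[K]_m) (A B : {set 'I_n}) :
  A \subset B -> ((\sum_(i in A) V i) <= (\sum_(i in B) V i))%MS.
Proof.
move=> AB; apply/sumsmx_subP => i iA; apply: (sumsmx_sup i) => //.
exact: (fintype.subsetP AB).
Qed.

Lemma trunc1 n m (V : 'I_n -> 'M[K]_m) : (#|{set 'I_n}| < #|K|)%N ->
  exists V' : 'I_n -> 'M[K]_m, forall A,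
    span_dim V' A = minn (span_dim V A) (span_dim V [set: 'I_n]%SET).-1.
Proof.
move=> Kbig.
pose W (A : {set 'I_n}) := (\sum_(i in A) V i)%MS.
pose r := \rank (W [set: 'I_n]%SET).
have WT A : (W A <= W [set: 'I_n]%SET)%MS by apply: sumsmx_subset; apply: finset.subsetT.
have rT A : (\rank (W A) <= r)%N by apply: mxrankS.
have [r0|rpos] := posnP r.
  exists V => A; rewrite /span_dim -/(W A) -/(W [set: 'I_n]%SET) -/r r0 /=.
  by have := rT A; rewrite r0 leqn0 => /eqP ->.
pose P := [set Sp (W A) | A in [set A | \rank (W A) < r]%N].
have cardP : (#|finset.cover P| < #|Sp (W [set: 'I_n]%SET)|)%N.
  apply: leq_ltn_trans (leq_card_cover P).1 _.
  have K0 : (0 < #|K|)%N by apply/card_gt0P; exists 0.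
  rewrite card_Sp -/r.
  apply: (@leq_ltn_trans (#|P| * #|K| ^ r.-1)%N).
    rewrite -sum_nat_const; apply: leq_sum => X /imsetP[A]; rewrite inE => HA ->.
    by rewrite card_Sp leq_pexp2l // -ltnS prednK.
  apply: (leq_ltn_trans (leq_mul (leq_trans (leq_imset_card _ _) (max_card _)) (leqnn _))).
  by rewrite -{2}(prednK rpos) expnS ltn_mul2r expn_gt0 K0.
have [v vW vnB] : exists2 v, v \in Sp (W [set: 'I_n]%SET) & v \notin finset.cover P.
  apply/subsetPn; apply: contraTN cardP => /subset_leq_card.
  by rewrite leqNgt.
have vnA A : (\rank (W A) < r)%N -> (v <= W A)%MS = false.
  move=> HA; apply: negbTE; apply: contra vnB => vA.
  rewrite /finset.cover; apply/finset.bigcupP; exists (Sp (W A)); last by rewrite inE.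
  by apply/imsetP; exists A; rewrite ?inE.
have vnz : v != 0.
  apply: contraFN (vnA (finset.set0) _) => [/eqP -> |]; first by rewrite sub0mx.
  by rewrite /W big_set0 mxrank0.
exists (fun i => V i *m cokermx v) => A; rewrite /span_dim.
transitivity (\rank (W A *m cokermx v)).
  by rewrite (sumsmxMr (fun i => i \in A) V (cokermx v)).
rewrite rank_coker // -/(W A) -/(W [set: 'I_n]%SET) -/r.
case: (ltnP (\rank (W A)) r) => HA.
  by rewrite vnA // subn0; apply/esym/minn_idPl; rewrite -ltnS prednK.
have EA : (W A == W [set: 'I_n]%SET)%MS.
  by rewrite -(mxrank_leqif_eq (WT A)).2 eqn_leq HA rT.
have vA : (v <= W A)%MS.
  case/andP: EA => _ TA; apply: submx_trans TA; by rewrite inE in vW.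
have rA : \rank (W A) = r by apply/eqP; rewrite eqn_leq HA rT.
by rewrite vA rA subn1; apply/esym/minn_idPr; apply: leq_pred.
Qed.
End Lin.

Section DS.
Variable K : fieldType.
Variables m1 m2 : nat.
Let Pl : 'M[K]_(m1, m1 + m2) := row_mx 1%:M 0.
Let Pr : 'M[K]_(m2, m1 + m2) := row_mx 0 1%:M.

Lemma block_eq (A : 'M[K]_m1) (B : 'M[K]_m2) :
  (block_mx A 0 0 B :=: A *m Pl + B *m Pr)%MS.
Proof.
rewrite block_mxEv /Pl /Pr !mul_mx_row !mulmx1 !mulmx0.
by apply: eqmx_sym; apply: addsmxE.
Qed.

Lemma block_adds (A C : 'M[K]_m1) (B D : 'M[K]_m2) :
  (block_mx A 0 0 B + block_mx C 0 0 D :=: block_mx (A + C)%MS 0 0 (B + D)%MS)%MS.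
Proof.
apply: eqmx_trans (adds_eqmx (block_eq A B) (block_eq C D)) _.
apply: eqmx_sym; apply: eqmx_trans (block_eq _ _) _.
apply: eqmx_trans (adds_eqmx (addsmxMr A C Pl) (addsmxMr B D Pr)) _.
rewrite -!addsmxA [(C *m Pl + _)%MS]addsmxA [(C *m Pl + B *m Pr)%MS]addsmxC -!addsmxA.
exact (eqmx_refl _).
Qed.

Lemma dsum n (V1 : 'I_n -> 'M[K]_m1) (V2 : 'I_n -> 'M[K]_m2) (A : {set 'I_n}) :
  span_dim (fun i => block_mx (V1 i) 0 0 (V2 i)) A = (span_dim V1 A + span_dim V2 A)%N.
Proof.
rewrite /span_dim -rank_diag_block_mx; apply: eqmx_rank.
apply: (big_rec3 (fun X Y Z => (X == block_mx Y 0 0 Z)%MS)).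
  by rewrite block_mx0 !submx_refl.
move=> i y1 y2 y3 _ HX.
apply/eqmxP.
have := eqmx_trans (adds_eqmx (eqmx_refl (block_mx (V1 i) 0 0 (V2 i))) (eqmxP HX)) (block_adds (V1 i) y2 (V2 i) y3).
exact.
Qed.
End DS.


Lemma lift_rank (F K : fieldType) (f : {rmorphism F -> K}) n m (V : 'I_n -> 'M[F]_m) A :
  span_dim (fun i => map_mx f (V i)) A = span_dim V A.
Proof.
rewrite /span_dim -(mxrank_map f); apply/esym/eqmx_rank.
apply: (big_rec2 (fun X Y => (map_mx f X == Y)%MS)).
  by rewrite map_mx0 !submx_refl.
move=> i X Y _ HX; apply/eqmxP.
exact: eqmx_trans (map_addsmx f _ _) (adds_eqmx (eqmx_refl _) (eqmxP HX)).
Qed.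

Lemma span_mono (F : fieldType) n m (V : 'I_n -> 'M[F]_m) A :
  (span_dim V A <= span_dim V [set: 'I_n]%SET)%N.
Proof.
apply: mxrankS; apply/sumsmx_subP => i iA; apply: (sumsmx_sup i) => //.
Qed.

Lemma multi (K : fieldType) n m (V : 'I_n -> 'M[K]_m) k :
  exists m' (V' : 'I_n -> 'M[K]_m'), forall A, span_dim V' A = (k * span_dim V A)%N.
Proof.
elim: k => [|k [m' [V' HV']]].
  exists 0%N, (fun _ => 0) => A; rewrite mul0n.
  by apply/eqP; rewrite -leqn0 /span_dim rank_leq_row.
exists (m + m')%N, (fun i => block_mx (V i) 0 0 (V' i)) => A.
by rewrite dsum HV' mulSn.
Qed.

Lemma truncK (K : finFieldType) n m (V : 'I_n -> 'M[K]_m) k :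
  (#|{set 'I_n}| < #|K|)%N ->
  exists V' : 'I_n -> 'M[K]_m, forall A,
    span_dim V' A = minn (span_dim V A) (span_dim V [set: 'I_n]%SET - k).
Proof.
move=> Kbig; elim: k => [|k [V' HV']].
  exists V => A; rewrite subn0; apply/esym/minn_idPl; exact: span_mono.
have [V'' HV''] := trunc1 V' Kbig.
exists V'' => A; rewrite HV'' !HV'.
have := span_mono V A; set a := span_dim V A; set T := span_dim V _.
move=> aT; rewrite -subn1; lia.
Qed.

Lemma rep_gen (R : realType) n (F : finFieldType) m (V : 'I_n -> 'M[F]_m) (j e : nat) :
  representable (fun A : {set 'I_n} =>
    ((minn (j * span_dim V A) (j * span_dim V [set: 'I_n]%SET - e))%:R : R)).
Proof.
have [K [f Kbig]] := ext_big F #|{set 'I_n}|.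
have [m' [V2 HV2]] := multi (fun i => map_mx f (V i)) j.
have [V3 HV3] := truncK V2 e Kbig.
exists #|K|, K, m', V3; split => // A.
by rewrite HV3 !HV2 !lift_rank.
Qed.

Lemma min_bound (R : realFieldType) (a b eps e' u : R) :
  e' <= eps -> eps < e' + u ->
  `|Num.min a (b - eps) - Num.min a (b - e')| <= u.
Proof.
move=> h1 h2.
have [H1|H1] := leP a (b - eps); have [H2|H2] := leP a (b - e');
rewrite ler_norml; apply/andP; split; lra.
Qed.

Lemma approx_bound (R : realType) (a b : nat) (eps : R) (j : nat) :
  (a <= b)%N -> 0 <= eps <= b%:R ->
  `|Num.min (a%:R : R) (b%:R - eps) -
    (j.+1%:R)^-1 * (minn (j.+1 * a) (j.+1 * b - Num.truncn (j.+1%:R * eps)))%:R|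
  <= (j.+1%:R)^-1.
Proof.
move=> ab /andP[e0 eb].
set t : R := j.+1%:R; set e := Num.truncn (t * eps).
have t0 : 0 < t by rewrite ltr0n.
have te0 : 0 <= t * eps by rewrite mulr_ge0 // ltW.
have [eL eU] : e%:R <= t * eps /\ t * eps < e.+1%:R.
  by have /andP[] := truncn_itv te0.
have ejb : (e <= j.+1 * b)%N.
  rewrite -(ler_nat R) natrM -/t; apply: le_trans eL _.
  by rewrite ler_wpM2l // ltW.
rewrite -minEnat natr_min natrB // !natrM -/t.
have tinv : t * t^-1 = 1 by rewrite mulfV // gt_eqF.
have ti0 : 0 < t^-1 by rewrite invr_gt0.
rewrite (minr_pMr _ _ (ltW ti0)) mulrA mulVf ?gt_eqF // mul1r mulrBr mulrA mulVf ?gt_eqF // mul1r.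
have eU' : t * eps < e%:R + 1 by move: eU; rewrite -addn1 natrD.
apply: min_bound.
  by rewrite -(ler_pM2l t0) mulrA tinv mul1r.
by rewrite -(ltr_pM2l t0) mulrDr mulrA tinv mul1r.
Qed.

Lemma natSinv_lt (R : realType) (e : R) : 0 < e ->
  \forall n \near \oo%classic, n.+1%:R^-1 < e.
Proof.
move=> e0; exists (Num.truncn e^-1) => // n /= Hn.
rewrite invf_plt ?posrE ?ltr0n //.
apply: lt_le_trans (truncnS_gt _) _.
by rewrite ler_nat ltnS.
Qed.

Theorem theorem2 (R : realType) (n : nat) (h : {set 'I_n} -> R) :
  representable h ->
  forall eps : R, 0 <= eps <= h [set: 'I_n]%SET ->
    almost_representable (truncate h eps) /\
    (eps \is a Num.int -> representable (truncate h eps)).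
Proof.
move=> [q [F [m [V [_ hV]]]]] eps /andP[e0 eT].
rewrite hV in eT.
split.
  exists (fun j A => ((minn (j.+1 * span_dim V A)
            (j.+1 * span_dim V [set: 'I_n]%SET - Num.truncn (j.+1%:R * eps)))%:R : R)).
  exists (fun j => (j.+1%:R : R)^-1).
  split; first by move=> j; exact: rep_gen.
  split; first by move=> j; rewrite invr_gt0 ltr0n.
  move=> A; rewrite /truncate !hV.

  apply/(@cvgrPdist_le R R^o) => e he.
  have := natSinv_lt he; apply: filterS => j Hj.
  apply: le_trans (ltW Hj).
  by apply: approx_bound; rewrite ?span_mono ?e0 ?eT.
move=> eint; have /natrP[k ek] : eps \is a Num.nat by rewrite -intrEge0.
have kT : (k <= span_dim V [set: 'I_n]%SET)%N by rewrite -(ler_nat R) -ek.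
have [q' [K' [m' [V' [Hq HV']]]]] := rep_gen R V 1 k.
exists q', K', m', V'; split => // A.
rewrite -HV' /truncate !hV ek !mul1n -minEnat natr_min natrB //.
Qed.
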